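(* Let $X$ be a $k$-dimensional complex with vertex set $[n]$ and complete $(k-1)$-skeleton. Fix $d>0$ and let $E=D_{k-1}(X)-dI$. Let $f\ge0$ be such that $\|E\,\delta_{k-2}e_F\|\le f\,\|\delta_{k-2}e_F\|$ for all $F\in X_{k-2}$. Then $\|Eb\|\le k f\|b\|$ for all $b\in B^{k-1}(X)$.
   Context: Standard Euclidean norms. Complexes have linearly ordered vertex sets; $X_i$ is the set of $i$-faces; $[F:G]$ is the oriented incidence number ($(-1)^j$ if $F\setminus G=\{v_j\}$, $F=\{v_0<\dots<v_i\}$; $0$ if $G\not\subseteq F$). Complete $(k-1)$-skeleton: every vertex set of size at most $k$ is a face. $(\delta_{k-2}f)(H)=\sum_{G\in X_{k-2}}[H:G]f(G)$, $B^{k-1}(X)=\operatorname{im}\delta_{k-2}$, $e_F$ is the indicator cochain of $F$. $D_{k-1}(X)$ is the diagonal $X_{k-1}\times X_{k-1}$ matrix whose entry at $F$ is $\deg(F)$, the number of $k$-faces containing $F$. *)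

(* Defs.v *)
From HB Require Import structures.
From mathcomp Require Import all_boot all_order all_algebra.
Set Implicit Arguments. Unset Strict Implicit. Unset Printing Implicit Defensive.
Import Order.TTheory GRing.Theory Num.Theory.
Local Open Scope ring_scope.

(* An i-face is a face with i+1 vertices; we index
   face sets by cardinality: [faces X m] = X_{m-1}. *)
Definition is_complex (n : nat) (X : {set {set 'I_n}}) : Prop :=
  forall F G : {set 'I_n}, F \in X -> G \subset F -> G \in X.

Definition is_dim (n k : nat) (X : {set {set 'I_n}}) : Prop :=
  (forall F, F \in X -> (#|F| <= k.+1)%N) /\ (exists2 F, F \in X & #|F| = k.+1).

Definition complete_skeleton (n k : nat) (X : {set {set 'I_n}}) : Prop :=
  forall F : {set 'I_n}, (#|F| <= k)%N -> F \in X.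

Definition faces (n : nat) (X : {set {set 'I_n}}) (m : nat) : {set {set 'I_n}} :=
  [set F in X | #|F| == m].

(* oriented incidence number [F:G]: (-1)^j if F \ G = {v_j} where
   F = {v_0 < ... < v_i} (j = number of vertices of F below v_j);
   0 otherwise. *)
Definition incidence (R : ringType) (n : nat) (F G : {set 'I_n}) : R :=
  if (G \subset F) && (#|F :\: G| == 1%N) then
    match [pick v in F :\: G] with
    | Some v => (-1) ^+ #|[set u in F | (u < v)%N]|
    | None => 0
    end
  else 0.

(* cochains: real-valued functions on vertex sets (only values on the relevant
   faces matter) *)
Definition cochain (R : Type) (n : nat) := {set 'I_n} -> R.

Definition coboundary (R : ringType) (n k : nat) (X : {set {set 'I_n}})
  (f : cochain R n) : cochain R n :=
  fun H => \sum_(G in faces X k.-1) incidence R H G * f G.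

Definition in_coboundaries (R : ringType) (n k : nat) (X : {set {set 'I_n}})
  (b : cochain R n) : Prop :=
  exists g : cochain R n, forall F, F \in faces X k -> b F = coboundary k X g F.

Definition indicator (R : ringType) (n : nat) (F : {set 'I_n}) : cochain R n :=
  fun G => if G == F then 1 else 0.

Definition deg (n k : nat) (X : {set {set 'I_n}}) (F : {set 'I_n}) : nat :=
  #|[set H in faces X k.+1 | F \subset H]|.

Definition Eop (R : ringType) (n k : nat) (X : {set {set 'I_n}}) (d : R)
  (b : cochain R n) : cochain R n :=
  fun F => ((deg k X F)%:R - d) * b F.

Definition norm_k (R : rcfType) (n k : nat) (X : {set {set 'I_n}})
  (b : cochain R n) : R :=
  Num.sqrt (\sum_(F in faces X k) b F ^+ 2).

(* Main.v *)
Require Import Defs.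
From HB Require Import structures.
From mathcomp Require Import all_boot all_order all_algebra.
From mathcomp Require Import ring lra.
Set Implicit Arguments. Unset Strict Implicit. Unset Printing Implicit Defensive.
Import Order.TTheory GRing.Theory Num.Theory.
Local Open Scope ring_scope.


Section Comb.
Variable n : nat.
Implicit Types (A G H K : {set 'I_n}).

Definition Sz (m : nat) : {set {set 'I_n}} := [set A : {set 'I_n} | #|A| == m].

Lemma one_more G H : G \subset H -> #|H| = #|G|.+1 ->
  exists w, [/\ w \in H, w \notin G, H = w |: G & G = H :\ w].
Proof.
move=> sGH cH.
have : #|H :\: G| == 1%N.
  by rewrite cardsD (setIidPr sGH) cH subSnn.
move/cards1P=> [w hw].
have wHG : w \in H :\: G by rewrite hw set11.
move: (wHG); rewrite inE => /andP[wG wH].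
have memH : forall y, (y \in H) = (y == w) || (y \in G).
  move=> y; apply/idP/idP.
    move=> yH; case yG: (y \in G); first by rewrite orbT.
    have : y \in H :\: G by rewrite inE yG yH.
    by rewrite hw inE => ->.
  by case/orP => [/eqP -> //|yG]; apply: (subsetP sGH).
exists w; split => //.
  by apply/setP=> y; rewrite in_setU1 memH.
apply/setP=> y; rewrite in_setD1 memH.
case: (y =P w) => [->|] /=; first by rewrite (negbTE wG).
by [].
Qed.

Lemma RI1 (R : nmodType) m A (phi : {set 'I_n} -> R) : #|A| = m.+1 ->
  \sum_(x in A) phi (A :\ x) = \sum_(G in Sz m | G \subset A) phi G.
Proof.
move=> cA.
rewrite -big_imset /=; last first.
  move=> x y xA yA e.
  have : x \notin A :\ y by rewrite -e setD11.
  by rewrite in_setD1 xA andbT negbK => /eqP.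
apply: eq_bigl => G; apply/imsetP/andP.
  move=> [x xA ->]; split; last exact: subsetDl.
  by rewrite inE; move: cA; rewrite (cardsD1 x) xA add1n => -[->].
move=> [GS sGA]; move: GS; rewrite inE => /eqP cG.
have [w [wA _ _ ->]] := one_more sGA (etrans cA (congr1 S (esym cG))).
by exists w.
Qed.

Lemma RI2 (R : nmodType) m G (phi : {set 'I_n} -> R) : #|G| = m ->
  \sum_(w in ~: G) phi (w |: G) = \sum_(H in Sz m.+1 | G \subset H) phi H.
Proof.
move=> cG.
rewrite -big_imset /=; last first.
  move=> x y; rewrite !inE => xG yG e.
  have : x \in y |: G by rewrite -e setU11.
  by rewrite in_setU1 (negbTE xG) orbF => /eqP.
apply: eq_bigl => H; apply/imsetP/andP.
  move=> [x]; rewrite inE => xG ->; split; last exact: subsetUr.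
  by rewrite inE cardsU1 xG cG.
move=> [HS sGH]; move: HS; rewrite inE => /eqP cH.
have [w [_ wG -> _]] := one_more sGH (etrans cH (congr1 S (esym cG))).
by exists w; rewrite ?inE.
Qed.

End Comb.


Section Sign.
Variable R : rcfType.
Variable n : nat.
Implicit Types (A G H K : {set 'I_n}).

Definition sg A (x : 'I_n) : R := (-1) ^+ #|[set u in A | (u < x)%N]|.

Lemma sg_sqr A x : sg A x ^+ 2 = 1.
Proof. exact: sqrr_sign. Qed.

Lemma sg_del_lt K (x y : 'I_n) : (y < x)%N -> sg (K :\ x) y = sg K y.
Proof.
move=> yx; rewrite /sg.
have -> : [set u in K :\ x | (u < y)%N] = [set u in K | (u < y)%N] => //.
apply/setP=> u; rewrite !inE.
case: (u =P x) => [->|] /=; [by rewrite ltnNge (ltnW yx) andbF | by []].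
Qed.

Lemma sg_del_gt K (x y : 'I_n) : y \in K -> (y < x)%N -> sg K x = - sg (K :\ y) x.
Proof.
move=> yK yx; rewrite /sg.
have -> : [set u in K | (u < x)%N] = y |: [set u in K :\ y | (u < x)%N].
  apply/setP=> u; rewrite !inE; case: (u =P y) => [->|] //=; by rewrite yK yx.
by rewrite cardsU1 !inE eqxx /= add1n exprS mulN1r.
Qed.

Lemma sg_anti K (x y : 'I_n) : x \in K -> y \in K -> x != y ->
  sg K x * sg (K :\ x) y = - (sg K y * sg (K :\ y) x).
Proof.
move=> xK yK ne.
case: (ltngtP x y) => [xy|yx|e]; last by move: ne; rewrite (val_inj e) eqxx.
  by rewrite (sg_del_lt K xy) (@sg_del_gt K y x xK xy) mulNr opprK mulrC.
by rewrite (sg_del_lt K yx) (@sg_del_gt K x y yK yx) mulNr mulrC.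
Qed.

Lemma inc_del A x : x \in A -> incidence R A (A :\ x) = sg A x.
Proof.
move=> xA; rewrite /incidence subsetDl /=.
have -> : A :\: (A :\ x) = [set x].
  apply/setP=> y; rewrite !inE; case: (y =P x) => [->|] /=; [by rewrite xA | idtac]. by rewrite andNb.
rewrite cards1 /=; case: pickP => [v|]; first by rewrite inE => /eqP ->.
by move/(_ x); rewrite inE eqxx.
Qed.

Lemma inc_sqr A G : G \subset A -> #|A| = #|G|.+1 -> incidence R A G ^+ 2 = 1.
Proof.
move=> sGA cA; have [w [wA _ _ ->]] := one_more sGA cA.
by rewrite inc_del // sg_sqr.
Qed.

Lemma inc_nsub A G : ~~ (G \subset A) -> incidence R A G = 0.
Proof. by move=> h; rewrite /incidence (negbTE h). Qed.

End Sign.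


Section Cob.
Variable R : rcfType.
Variables n k : nat.
Variable X : {set {set 'I_n}}.
Hypothesis hk : (0 < k)%N.
Hypothesis hskel : complete_skeleton k X.
Implicit Types (A G H K : {set 'I_n}).

Lemma facesE m : (m <= k)%N -> faces X m = Sz n m.
Proof.
move=> mk; apply/setP=> A; rewrite !inE; case: (#|A| =P m) => [e|]; rewrite ?andbT ?andbF //.
by apply: hskel; rewrite e.
Qed.

Lemma cobE (g : cochain R n) H : #|H| = k ->
  coboundary k X g H = \sum_(x in H) sg R H x * g (H :\ x).
Proof.
move=> cH; rewrite /coboundary facesE ?leq_pred //.
under [RHS]eq_bigr => x xH do rewrite -(inc_del R xH).
rewrite (RI1 (m := k.-1) (fun G => incidence R H G * g G)); last by rewrite prednK.
rewrite [LHS](bigID (fun G => G \subset H)) /= [X in _ + X]big1 ?addr0 //.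
by move=> G /andP[_ ns]; rewrite inc_nsub // mul0r.
Qed.

Lemma cocycle (g : cochain R n) K : #|K| = k.+1 ->
  \sum_(x in K) sg R K x * coboundary k X g (K :\ x) = 0.
Proof.
move=> cK.
pose a x y := sg R K x * sg R (K :\ x) y * g (K :\ x :\ y).
have e1 : \sum_(x in K) sg R K x * coboundary k X g (K :\ x) =
   \sum_(x in K) \sum_(y in K) (if y != x then a x y else 0).
  apply: eq_bigr => x xK; rewrite cobE; last first.
    by move: cK; rewrite (cardsD1 x) xK add1n => -[].
  rewrite mulr_sumr -big_mkcondr /=. apply: eq_big => y; last by move=> _; rewrite mulrA.
  by rewrite in_setD1 andbC.
have anti : forall x y, x \in K -> y \in K -> y != x -> a x y = - a y x.
  move=> x y xK yK ne; rewrite /a.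
  have -> : K :\ y :\ x = K :\ x :\ y.
    by apply/setP=> u; rewrite !in_setD1 !andbA [(u != x) && _]andbC.
  by rewrite (@sg_anti R n K x y xK yK) ?mulNr // eq_sym.
set S := \sum_(x in K) _ in e1.
have eS : S = - S.
  rewrite {1}/S exchange_big /= /S -sumrN; apply: eq_bigr => y yK.
  rewrite -sumrN; apply: eq_bigr => x xK.
  case: (x =P y) => [->|ne]; first by rewrite eqxx oppr0.
  have ne' : y != x by apply/eqP=> e; apply: ne; rewrite e.
  by rewrite ne' /= (anti x y xK yK ne').
rewrite e1; apply/eqP; rewrite -[S == 0](mulrn_eq0 _ 2) /= mulr2n.
by rewrite {2}eS subrr.
Qed.

End Cob.


Lemma CS (R : realDomainType) (I : finType) (A : {pred I}) (x : I -> R) :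
  (\sum_(i in A) x i) ^+ 2 <= #|A|%:R * \sum_(i in A) x i ^+ 2.
Proof.
set S := \sum_(i in A) x i; set Q := \sum_(i in A) x i ^+ 2.
have h : 0 <= \sum_(i in A) \sum_(j in A) (x i - x j) ^+ 2.
  by apply: sumr_ge0 => i _; apply: sumr_ge0 => j _; apply: sqr_ge0.
have e : forall i, \sum_(j in A) (x i - x j) ^+ 2 =
    x i ^+ 2 * #|A|%:R + Q - (x i * S) *+ 2.
  move=> i.
  have -> : \sum_(j in A) (x i - x j) ^+ 2 =
      \sum_(j in A) ((x i ^+ 2 + x j ^+ 2) - (x i * x j) *+ 2).
    by apply: eq_bigr => j _; rewrite sqrrB; ring.
  rewrite sumrB big_split /= sumr_const sumrMnl -mulr_sumr -/Q -/S.
  by rewrite mulr_natr.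
rewrite (eq_bigr _ (fun i _ => e i)) in h.
move: h; rewrite sumrB big_split /= -mulr_suml sumr_const sumrMnl -mulr_suml -/Q -/S.
rewrite -[Q *+ #|A|]mulr_natr; move: (#|A|%:R : R) => c h.
rewrite mulr2n in h; nra.
Qed.


Lemma exch_dep (R : nmodType) (I J : finType) (A : {pred I}) (B : {pred J})
  (P : I -> J -> bool) (F : I -> J -> R) :
  \sum_(i in A) \sum_(j in B | P i j) F i j = \sum_(j in B) \sum_(i in A | P i j) F i j.
Proof.
under eq_bigr => i _ do rewrite big_mkcondr.
rewrite exchange_big /=; apply: eq_bigr => j _.
by rewrite big_mkcondr.
Qed.

Lemma sqrt_le (R : rcfType) (A C f : R) : 0 <= f -> 0 <= C ->
  (Num.sqrt A <= f * Num.sqrt C) = (A <= f ^+ 2 * C).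
Proof.
move=> hf hC.
rewrite -[f in f * _](ger0_norm hf) -sqrtr_sqr -sqrtrM ?sqr_ge0 // ler_sqrt //.
by rewrite mulr_ge0 ?sqr_ge0.
Qed.

Theorem proposition3p6 (R : rcfType) (n k : nat) (X : {set {set 'I_n}})
  (hk : (0 < k)%N)
  (hX : is_complex X) (hdim : is_dim k X) (hskel : complete_skeleton k X)
  (d : R) (hd : 0 < d) (f : R) (hf : 0 <= f)
  (hloc : forall F, F \in faces X k.-1 ->
     norm_k k X (Eop k X d (coboundary k X (indicator R F)))
       <= f * norm_k k X (coboundary k X (indicator R F))) :
  forall b : cochain R n, in_coboundaries k X b ->
    norm_k k X (Eop k X d b) <= k%:R * f * norm_k k X b.
Proof.
move=> b [g hb].
set e := fun F => (deg k X F)%:R - d.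
have fk : faces X k = Sz n k by rewrite (facesE hskel).
have fk1 : faces X k.-1 = Sz n k.-1 by rewrite (facesE hskel) ?leq_pred.
have kk : k.-1.+1 = k by rewrite prednK.
rewrite fk in hb.
have cSk : forall F, F \in Sz n k -> #|F| = k by move=> F; rewrite inE => /eqP.
have cSk1 : forall F, F \in Sz n k.-1 -> #|F| = k.-1 by move=> F; rewrite inE => /eqP.
have k1 : (1 : R) <= k%:R by rewrite ler1n.
pose phi (v : 'I_n) (G : {set 'I_n}) := (v \notin G)%:R * b (v |: G) ^+ 2.
have P1 : forall F, F \in Sz n k -> forall v,
    b F ^+ 2 <= k%:R * \sum_(G in Sz n k.-1 | G \subset F) phi v G.
  move=> F FS v.
  rewrite -(RI1 (m := k.-1)); last by rewrite kk cSk.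
  have [vF|vF] := boolP (v \in F).
    rewrite (bigD1 v) //= {1}/phi setD11 setD1K //= mul1r.
    apply: le_trans (ler_peMl _ k1); last first.
      by apply: addr_ge0; [exact: sqr_ge0 | apply: sumr_ge0 => x _; rewrite mulr_ge0 ?sqr_ge0 ?ler0n].
    by rewrite lerDl; apply: sumr_ge0 => x _; rewrite mulr_ge0 ?sqr_ge0 ?ler0n.
  set K := v |: F.
  have cK : #|K| = k.+1 by rewrite cardsU1 vF cSk.
  have KxS : forall x, x \in K -> K :\ x \in Sz n k.
    by move=> x xK; rewrite inE; move: cK; rewrite (cardsD1 x) xK add1n => -[->].
  have cc := cocycle hk hskel g cK.
  rewrite (eq_bigr (fun x => sg R K x * b (K :\ x))) in cc; last first.
    by move=> x xK; rewrite hb // KxS.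
  rewrite (bigD1 v) /= ?setU11 // in cc.
  have KvF : K :\ v = F.
    apply/setP=> u; rewrite !inE; case: (u =P v) => [->|] //=; by rewrite (negbTE vF).
  rewrite KvF in cc.
  rewrite (eq_bigl (fun x => x \in F)) in cc; last first.
    move=> x; rewrite /K in_setU1; case: (x =P v) => [->|xv] /=; [by rewrite (negbTE vF) | by rewrite andbT].
  have eb : b F ^+ 2 = (\sum_(x in F) sg R K x * b (K :\ x)) ^+ 2.
    have h : sg R K v * b F = - (\sum_(x in F) sg R K x * b (K :\ x)).
      by apply/eqP; rewrite -addr_eq0 cc.
    by rewrite -[LHS]mul1r -(sg_sqr R K v) -exprMn h sqrrN.
  rewrite eb; apply: le_trans (CS _ _) _; rewrite cSk //.
  rewrite ler_pM2l ?ltr0n //; apply: ler_sum => x xF.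
  have -> : K :\ x = v |: (F :\ x).
    apply/setP=> u; rewrite !inE; case: (u =P x) => [->|ux] /=.
      by case: (x =P v) => // xv; move: vF; rewrite -xv xF.
    by [].
  by rewrite /phi exprMn sg_sqr mul1r !inE negb_and negbK (negbTE vF) orbT mul1r.

pose B (G : {set 'I_n}) := \sum_(H in Sz n k | G \subset H) b H ^+ 2.
have B0 : forall G, 0 <= B G by move=> G; apply: sumr_ge0 => H _; apply: sqr_ge0.
have PB : forall G, G \in Sz n k.-1 -> \sum_v phi v G = B G.
  move=> G GS.
  rewrite (bigID (fun v => v \in G)) /= big1 ?add0r; last first.
    by move=> v vG; rewrite /phi vG mul0r.
  rewrite /B -kk -(RI2 _ (cSk1 _ GS)).
  by apply: eq_big => v; rewrite ?inE // => vG; rewrite /phi vG mul1r.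
have P2 : forall F, F \in Sz n k ->
    n%:R * b F ^+ 2 <= k%:R * \sum_(G in Sz n k.-1 | G \subset F) B G.
  move=> F FS.
  have -> : n%:R * b F ^+ 2 = \sum_(v : 'I_n) b F ^+ 2.
    by rewrite sumr_const card_ord mulr_natl.
  apply: le_trans (ler_sum _ (fun v _ => P1 F FS v)) _.
  rewrite -mulr_sumr exchange_big /=; rewrite ler_pM2l ?ltr0n //.
  by apply: ler_sum => G /andP[GS _]; rewrite PB.
have P3 : forall G, G \in Sz n k.-1 ->
    \sum_(H in Sz n k | G \subset H) e H ^+ 2 <= f ^+ 2 * n%:R.
  move=> G GS.
  have := hloc G; rewrite fk1 => /(_ GS).
  have dG : forall H, H \in Sz n k ->
      coboundary k X (indicator R G) H ^+ 2 = (G \subset H)%:R.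
    move=> H HS; rewrite /coboundary fk1 (bigD1 G) //= big1 ?addr0; last first.
      by move=> G' /andP[_ ne]; rewrite /indicator (negbTE ne) mulr0.
    rewrite /indicator eqxx mulr1.
    have [sGH|nsGH] := boolP (G \subset H); last by rewrite inc_nsub // expr0n.
    by rewrite inc_sqr // (cSk _ HS) (cSk1 _ GS) kk.
  rewrite /norm_k fk /Eop sqrt_le //; last first.
    by apply: sumr_ge0 => H _; apply: sqr_ge0.
  have -> : \sum_(F in Sz n k) (((deg k X F)%:R - d) *
              coboundary k X (indicator R G) F) ^+ 2 =
            \sum_(H in Sz n k | G \subset H) e H ^+ 2.
    rewrite big_mkcondr; apply: eq_bigr => H HS; rewrite exprMn dG //.
    by case: (G \subset H); rewrite ?mulr1 ?mulr0.
  rewrite (eq_bigr _ dG).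
  have -> : \sum_(i in Sz n k) ((G \subset i)%:R : R) =
            \sum_(i in Sz n k | G \subset i) (1 : R).
    by rewrite big_mkcondr; apply: eq_bigr => i _; case: (G \subset i).
  have -> : \sum_(i in Sz n k | G \subset i) (1 : R) = #|~: G|%:R.
    by rewrite -kk -(RI2 _ (cSk1 _ GS)) sumr_const.
  move=> h; apply: le_trans h _; rewrite ler_wpM2l ?sqr_ge0 // ler_nat.
  by rewrite -[X in (_ <= X)%N]card_ord max_card.
rewrite /norm_k fk /Eop sqrt_le ?mulr_ge0 ?ler0n //; last first.
  by apply: sumr_ge0 => H _; apply: sqr_ge0.
set N := \sum_(F in Sz n k) b F ^+ 2.
have N0 : 0 <= N by apply: sumr_ge0 => H _; apply: sqr_ge0.
have [n0|npos] := posnP n.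
  rewrite big1 ?mulr_ge0 ?sqr_ge0 // => F /cSk cF.
  have hle : (#|F| <= n)%N by rewrite -[X in (_ <= X)%N]card_ord max_card.
  exfalso; move: hle hk; rewrite cF => hle; move: (leq_trans hle (eq_leq n0)).
  by rewrite leqn0 => /eqP ->.
have npR : (0 : R) < n%:R by rewrite ltr0n.
rewrite -(ler_pM2l npR).
have step1 : n%:R * \sum_(F in Sz n k) (((deg k X F)%:R - d) * b F) ^+ 2 =
    \sum_(F in Sz n k) e F ^+ 2 * (n%:R * b F ^+ 2).
  by rewrite mulr_sumr; apply: eq_bigr => F _; rewrite exprMn mulrCA.
have step2 : \sum_(F in Sz n k) e F ^+ 2 * (n%:R * b F ^+ 2) <=
    \sum_(F in Sz n k) e F ^+ 2 * (k%:R * \sum_(G in Sz n k.-1 | G \subset F) B G).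
  by apply: ler_sum => F FS; rewrite ler_wpM2l ?sqr_ge0 ?P2.
have step3 : \sum_(F in Sz n k) e F ^+ 2 * (k%:R * \sum_(G in Sz n k.-1 | G \subset F) B G)
    = k%:R * \sum_(G in Sz n k.-1) (\sum_(F in Sz n k | G \subset F) e F ^+ 2) * B G.
  under eq_bigr => F _ do rewrite mulrCA mulr_sumr.
  rewrite -mulr_sumr (exch_dep _ _ (fun (F G : {set 'I_n}) => G \subset F)) /=.
  by congr (_ * _); apply: eq_bigr => G _; rewrite mulr_suml.
have step4 : \sum_(G in Sz n k.-1) (\sum_(F in Sz n k | G \subset F) e F ^+ 2) * B G <=
    \sum_(G in Sz n k.-1) (f ^+ 2 * n%:R) * B G.
  by apply: ler_sum => G GS; rewrite ler_wpM2r ?P3.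
have step5 : \sum_(G in Sz n k.-1) B G = N * k%:R.
  rewrite /B (exch_dep _ _ (fun (G H : {set 'I_n}) => G \subset H) (fun (G H : {set 'I_n}) => b H ^+ 2)) /N mulr_suml.
  apply: eq_bigr => H HS.
  by rewrite -(RI1 (fun _ => b H ^+ 2)) ?sumr_const ?(cSk _ HS) ?kk // mulr_natr.
rewrite step1; apply: le_trans step2 _; rewrite step3.
apply: le_trans (ler_wpM2l (ler0n _ _) step4) _.
rewrite -mulr_sumr step5.
rewrite le_eqVlt; apply/orP; left; apply/eqP; ring.
Qed.
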